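(* Let $P_\infty=u_1,u_2,\dots$ be the one-way infinite path, with initial configuration $c_0(u_1)=1$ and $c_0(u_i)=2$ for $i\geq2$ (each vertex gets as many chips as its degree). Then for every $k\geq0$: the sequence $(c_{2k}(u_i))_{i\geq1}$ is the word consisting of $k$ copies of the block $1,3$, followed by $1$, followed by $2,2,2,\dots$; and the sequence $(c_{2k+1}(u_i))_{i\ge1}$ is $2$, followed by $k$ copies of the block $1,3$, followed by $1$, followed by $2,2,2,\dots$.
   Context: Diffusion process: for a configuration $c_t$, $c_{t+1}(w)=c_t(w)-|\{x\in N(w): c_t(w)>c_t(x)\}|+|\{x\in N(w): c_t(w)<c_t(x)\}|$ for all vertices $w$ simultaneously (every vertex sends one chip to each neighbour with strictly fewer chips). *)

(* Defs.v *)
From Stdlib Require Import ZArith List Lia.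
Open Scope Z_scope.

(* Vertices of the one-way infinite path P_oo = u_1, u_2, ... are encoded
   by nat: vertex i : nat stands for u_(i+1). *)

Definition path_nbrs (i : nat) : list nat :=
  match i with
  | O => (1%nat :: nil)
  | S j => (j :: S (S j) :: nil)
  end.

Definition config := nat -> Z.

Definition diffusion_step (N : nat -> list nat) (c : config) : config :=
  fun w =>
    c w
    - Z.of_nat (length (filter (fun x => Z.ltb (c x) (c w)) (N w)))
    + Z.of_nat (length (filter (fun x => Z.ltb (c w) (c x)) (N w))).

Fixpoint diffusion (N : nat -> list nat) (c0 : config) (t : nat) : config :=
  match t with
  | O => c0
  | S t' => diffusion_step N (diffusion N c0 t')
  end.

Definition c0_path : config := fun i => match i with O => 1 | _ => 2 end.

(* The word (1,3)^k 1 2 2 2 ..., indexed from 0. *)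
Definition even_word (k : nat) : config :=
  fun i =>
    if Nat.ltb i (2 * k) then (if Nat.even i then 1 else 3)
    else if Nat.eqb i (2 * k) then 1
    else 2.

Definition odd_word (k : nat) : config :=
  fun i => match i with O => 2 | S j => even_word k j end.

(* Main.v *)
Require Import Defs.
From Stdlib Require Import ZArith List Lia.

Lemma ev_t : forall x, Nat.even x = true -> exists m, x = (2*m)%nat.
Proof. intros x H. apply Nat.even_spec in H. destruct H as [m Hm]. exists m; lia. Qed.
Lemma ev_f : forall x, Nat.even x = false -> exists m, x = (2*m+1)%nat.
Proof. intros x H. assert (Nat.odd x = true) by (unfold Nat.odd; rewrite H; reflexivity).
  apply Nat.odd_spec in H0. destruct H0 as [m Hm]. exists m; lia. Qed.

Ltac crush := repeat match goal with
 | |- context[Nat.even ?x] => let E := fresh in destruct (Nat.even x) eqn:E;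
      [apply ev_t in E | apply ev_f in E]; destruct E
 | |- context[Nat.ltb ?a ?b] => destruct (Nat.ltb_spec a b)
 | |- context[Nat.eqb ?a ?b] => destruct (Nat.eqb_spec a b)
 end; simpl; lia.

Lemma step_even : forall k i, diffusion_step path_nbrs (even_word k) i = odd_word k i.
Proof.
  intros k i. destruct i as [|[|j]]; unfold diffusion_step, odd_word, even_word; simpl path_nbrs; cbn [filter]; crush.
Qed.

Lemma step_odd : forall k i, diffusion_step path_nbrs (odd_word k) i = even_word (S k) i.
Proof.
  intros k i. destruct i as [|[|[|j]]]; unfold diffusion_step, odd_word, even_word; simpl path_nbrs; cbn [filter]; crush.
Qed.

Lemma step_ext : forall c d, (forall x, c x = d x) -> forall i,
  diffusion_step path_nbrs c i = diffusion_step path_nbrs d i.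
Proof. intros c d H i. unfold diffusion_step. rewrite H.
  destruct i as [|i]; simpl path_nbrs; cbn [filter]; rewrite ?H; reflexivity. Qed.

Theorem lemma15 : forall k i : nat,
  diffusion path_nbrs c0_path (2 * k) i = even_word k i /\
  diffusion path_nbrs c0_path (2 * k + 1) i = odd_word k i.
Proof.
  assert (H : forall k i, diffusion path_nbrs c0_path (2 * k) i = even_word k i).
  { induction k as [|k IH]; intros i.
    - simpl. destruct i as [|i]; reflexivity.
    - replace (2 * S k)%nat with (S (S (2 * k))) by lia.
      cbn [diffusion].
      assert (E1 : forall x, diffusion_step path_nbrs (diffusion path_nbrs c0_path (2*k)) x = odd_word k x).
      { intros x. rewrite <- step_even. apply step_ext. exact IH. }
      rewrite <- step_odd. apply step_ext. exact E1. }
  intros k i. split; [apply H|].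
  replace (2 * k + 1)%nat with (S (2 * k)) by lia. cbn [diffusion].
  rewrite <- step_even. apply step_ext. exact (H k).
Qed.
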